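(* Let $D$ be a contractive distance, convex in each argument, such that for every state the infimum defining $E_D$ is attained by some separable state. Then for every state $\rho$ and every $0\le\epsilon\le E_D(\rho)$, $$(E_D)^{(D)}_\epsilon(\rho)=E_D(\rho)-\epsilon,$$ where $(E_D)^{(D)}_\epsilon$ is the $\epsilon$-measure of $E_D$ taken with respect to the same distance $D$.
   Context: $\mathcal H$ is a finite-dimensional multipartite Hilbert space, $\mathcal D(\mathcal H)$ its density matrices, $\mathcal S$ the separable states (convex combinations of product states). A distance $D$ is a metric on density matrices; convex in each argument means $D(p\rho_1+(1-p)\rho_2,\sigma)\le pD(\rho_1,\sigma)+(1-p)D(\rho_2,\sigma)$; contractive means $D(\Lambda[\rho],\Lambda[\sigma])\le D(\rho,\sigma)$ for every CPT map $\Lambda$. $E_D(\rho)=\inf_{\sigma\in\mathcal S}D(\rho,\sigma)$. For a function $F$ on states and $\epsilon\ge0$, $F^{(D)}_\epsilon(\rho)=\inf\{F(\sigma)\mid \sigma\in\mathcal D(\mathcal H),\ D(\rho,\sigma)\le\epsilon\}$. *)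

(* Defs.v *)
(* Complex scalars: an arbitrary numClosedFieldType C
   (the field of complex numbers is an instance). *)
From HB Require Import structures.
From mathcomp Require Import all_boot all_order all_algebra.
Set Implicit Arguments. Unset Strict Implicit. Unset Printing Implicit Defensive.
Import Order.TTheory GRing.Theory Num.Theory.
Local Open Scope ring_scope.

Definition adjmx (C : numClosedFieldType) m n (A : 'M[C]_(m, n)) : 'M[C]_(n, m) :=
  (map_mx Num.conj A)^T.

Definition psd (C : numClosedFieldType) n (A : 'M[C]_n) : Prop :=
  adjmx A = A /\ forall v : 'cV[C]_n, 0 <= (adjmx v *m A *m v) 0 0.

Definition density (C : numClosedFieldType) n (A : 'M[C]_n) : Prop :=
  psd A /\ \tr A = 1.

(* Multipartite system with k parties, party i of dimension d i.
   Computational basis of the total space = tuples of local basis indices. *)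
Definition Idx (k : nat) (d : 'I_k -> nat) : finType :=
  {dffun forall i : 'I_k, 'I_(d i)}.

Definition dimH (k : nat) (d : 'I_k -> nat) : nat := #|Idx d|.

(* tensor product rho_0 (x) ... (x) rho_{k-1}, in coordinates *)
Definition prod_op (C : numClosedFieldType) (k : nat) (d : 'I_k -> nat)
  (rhos : forall i : 'I_k, 'M[C]_(d i)) : 'M[C]_(dimH d) :=
  \matrix_(a, b) \prod_(i < k)
      rhos i (@enum_val (Idx d) predT a i) (@enum_val (Idx d) predT b i).

Definition separable (C : numClosedFieldType) (k : nat) (d : 'I_k -> nat)
  (sigma : 'M[C]_(dimH d)) : Prop :=
  exists (m : nat) (p : 'I_m -> C) (rhos : 'I_m -> forall i : 'I_k, 'M[C]_(d i)),
    [/\ forall j, 0 <= p j, \sum_(j < m) p j = 1,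
        forall j i, density (rhos j i)
      & sigma = \sum_(j < m) p j *: prod_op (rhos j)].

(* block (i,j) of an operator on C^m (x) C^n *)
Definition blockmx (C : numClosedFieldType) m n (X : 'M[C]_(m * n)) (i j : 'I_m)
  : 'M[C]_n := \matrix_(r, s) X (mxvec_index i r) (mxvec_index j s).

(* Completely positive trace-preserving map on operators of C^n:
   linear, trace preserving, and id_m (x) L maps psd operators to psd
   operators for every m. *)
Definition CPTP (C : numClosedFieldType) n (L : 'M[C]_n -> 'M[C]_n) : Prop :=
  [/\ linear L,
      forall X, \tr (L X) = \tr X
    & forall (m : nat) (X Y : 'M[C]_(m * n)),
        (forall (i j : 'I_m) (r s : 'I_n),
            Y (mxvec_index i r) (mxvec_index j s) = L (blockmx X i j) r s) ->
        psd X -> psd Y].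

Definition metric_on_states (C : numClosedFieldType) n
  (D : 'M[C]_n -> 'M[C]_n -> C) : Prop :=
  forall rho sigma tau, density rho -> density sigma -> density tau ->
    [/\ 0 <= D rho sigma, D rho sigma = 0 <-> rho = sigma,
        D rho sigma = D sigma rho & D rho tau <= D rho sigma + D sigma tau].

Definition convex_each_arg (C : numClosedFieldType) n
  (D : 'M[C]_n -> 'M[C]_n -> C) : Prop :=
  forall (p : C) rho1 rho2 sigma, 0 <= p <= 1 ->
    density rho1 -> density rho2 -> density sigma ->
    D (p *: rho1 + (1 - p) *: rho2) sigma <= p * D rho1 sigma + (1 - p) * D rho2 sigma
 /\ D sigma (p *: rho1 + (1 - p) *: rho2) <= p * D sigma rho1 + (1 - p) * D sigma rho2.

Definition contractive (C : numClosedFieldType) n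
  (D : 'M[C]_n -> 'M[C]_n -> C) : Prop :=
  forall L, CPTP L -> forall rho sigma, density rho -> density sigma ->
    D (L rho) (L sigma) <= D rho sigma.

Definition is_inf (C : numClosedFieldType) (S : C -> Prop) (x : C) : Prop :=
  (forall y, S y -> x <= y) /\ (forall z, (forall y, S y -> z <= y) -> z <= x).

Definition is_E_D (C : numClosedFieldType) (k : nat) (d : 'I_k -> nat)
  (D : 'M[C]_(dimH d) -> 'M[C]_(dimH d) -> C) (E : 'M[C]_(dimH d) -> C) : Prop :=
  forall rho, density rho ->
    is_inf (fun y => exists sigma, separable sigma /\ y = D rho sigma) (E rho).

(* the set whose infimum defines F^{(D)}_eps(rho) *)
Definition eps_set (C : numClosedFieldType) n (D : 'M[C]_n -> 'M[C]_n -> C)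
  (F : 'M[C]_n -> C) (eps : C) (rho : 'M[C]_n) : C -> Prop :=
  fun y => exists sigma, [/\ density sigma, D rho sigma <= eps & y = F sigma].

(* Main.v *)
Require Import Defs.
From HB Require Import structures.
From mathcomp Require Import all_boot all_order all_algebra.
Set Implicit Arguments. Unset Strict Implicit. Unset Printing Implicit Defensive.
Import Order.TTheory GRing.Theory Num.Theory.
Local Open Scope ring_scope.

Lemma sum_prod_dep (R : comNzRingType) (k : nat) (d : 'I_k -> nat)
  (F : forall i : 'I_k, 'I_(d i) -> R) :
  \sum_(a : Idx d) \prod_(i < k) F i (a i) = \prod_(i < k) \sum_(j : 'I_(d i)) F i j.
Proof.
pose P_ := fun i : 'I_k => [ffun j : 'I_(d i) => F i j].
rewrite (reindex (@dffun_of_fprod _ (fun i => 'I_(d i)))); last first.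
  by apply/onW_bij/dffun_of_fprod_bij.
transitivity (\sum_(t : fprod (fun i => 'I_(d i))) \prod_(i in 'I_k) P_ i (t i)).
  apply: eq_bigr => t _; apply: eq_bigr => i _.
  by rewrite ffunE /dffun_of_fprod ffunE.
rewrite (@big_fprod R 0 1 *%R _ _ _ P_).
rewrite -(bigA_distr_big_dep (tagged_with (fun i : 'I_k => 'I_(d i))) (fun i j => untag 0 (P_ i) j)).
apply: eq_bigr => i _.
transitivity (\sum_(j : 'I_(d i)) P_ i j); last by apply: eq_bigr => j _; rewrite ffunE.
rewrite (big_tag P_ i).
by apply: eq_bigl.
Qed.

Lemma adjmxE (C : numClosedFieldType) m n (A : 'M[C]_(m, n)) i j :
  adjmx A i j = (A j i)^*.
Proof. by rewrite /adjmx !mxE. Qed.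

Lemma quadE (C : numClosedFieldType) n (A : 'M[C]_n) (v : 'cV[C]_n) :
  (adjmx v *m A *m v) 0 0 = \sum_a \sum_b (v a 0)^* * A a b * v b 0.
Proof.
rewrite mxE exchange_big /=; apply: eq_bigr => b _; rewrite mxE big_distrl /=.
by apply: eq_bigr => a _; rewrite adjmxE.
Qed.

Lemma gram_psd (C : numClosedFieldType) n (J : finType) (g : J -> 'I_n -> C) :
  psd (\matrix_(a, b) \sum_L (g L a)^* * g L b).
Proof.
split.
  apply/matrixP => a b; rewrite adjmxE !mxE rmorph_sum; apply: eq_bigr => L _.
  by rewrite rmorphM /= conjCK mulrC.
move=> v; rewrite quadE.
have -> : \sum_a \sum_b (v a 0)^* * (\matrix_(a, b) \sum_L (g L a)^* * g L b) a b * v b 0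
   = \sum_L (\sum_b g L b * v b 0)^* * (\sum_b g L b * v b 0).
  transitivity (\sum_a \sum_b \sum_L (v a 0)^* * (g L a)^* * (g L b * v b 0)).
    apply: eq_bigr => a _; apply: eq_bigr => b _.
    rewrite mxE big_distrr big_distrl /=; apply: eq_bigr => L _.
    by rewrite !mulrA.
  transitivity (\sum_L \sum_a \sum_b (v a 0)^* * (g L a)^* * (g L b * v b 0)).
    rewrite [RHS]exchange_big /=; apply: eq_bigr => a _.
    by rewrite exchange_big.
  apply: eq_bigr => L _.
  rewrite rmorph_sum big_distrl /=; apply: eq_bigr => a _.
  rewrite big_distrr /=; apply: eq_bigr => b _.
  by rewrite rmorphM /= [(v a 0)^* * _]mulrC.
by apply: sumr_ge0 => L _; rewrite mulrC mul_conjC_ge0.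
Qed.

Lemma adjmxM (C : numClosedFieldType) m n p (A : 'M[C]_(m, n)) (B : 'M[C]_(n, p)) :
  adjmx (A *m B) = adjmx B *m adjmx A.
Proof. by rewrite /adjmx map_mxM trmx_mul. Qed.

Definition gramf (C : numClosedFieldType) n (A : 'M[C]_n) (l r : 'I_n) : C :=
  sqrtC (spectral_diag A 0 l) * spectralmx A l r.

Lemma psd_gram (C : numClosedFieldType) n (A : 'M[C]_n) : psd A ->
  exists2 g, g = gramf A & forall r s, A r s = \sum_l (g l r)^* * g l s.
Proof.
move=> [Ah Apos].
have AtC : map_mx Num.conj A^T = A.
  by rewrite -[RHS]Ah /adjmx map_trmx.
have Anorm : A \is normalmx by rewrite qualifE /= AtC.
set P := spectralmx A; set lam := spectral_diag A.
have Pu : P \is unitarymx by apply: spectral_unitarymx.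
have AE : A = map_mx Num.conj P^T *m diag_mx lam *m P.
  by rewrite {1}(orthomx_spectralP Anorm) invmx_unitary.
have PPt : P *m map_mx Num.conj P^T = 1%:M by apply/unitarymxP.
have lam_ge0 : forall l, 0 <= lam 0 l.
  move=> l; have := Apos (map_mx Num.conj P^T *m delta_mx l 0).
  rewrite adjmxM.
  have -> : adjmx (map_mx Num.conj P^T) = P.
    by apply/matrixP => i j; rewrite adjmxE !mxE conjCK.
  have -> : adjmx (delta_mx l 0 : 'cV[C]_n) = delta_mx 0 l.
    by apply/matrixP => i j; rewrite adjmxE !mxE andbC; case: (_ && _); rewrite ?rmorph1 ?rmorph0.
  rewrite AE !mulmxA -(mulmxA _ P) PPt mulmx1 -(mulmxA _ P) PPt mulmx1.
  rewrite mul_mx_diag mxE (bigD1 l) //= big1 ?addr0; last first.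
    by move=> j /negbTE jl; rewrite !mxE jl /= mulr0n mulr0.
  by rewrite !mxE !eqxx /= mulr1n mul1r mulr1.
exists (gramf A) => // r s.
rewrite {1}AE mxE; apply: eq_bigr => l _.
rewrite mul_mx_diag !mxE rmorphM /= (geC0_conj (x := sqrtC (lam 0 l))) ?sqrtC_ge0 //.
by rewrite [sqrtC _ * (P l r)^*]mulrC !mulrA -(mulrA _ (sqrtC _) (sqrtC _)) -expr2 sqrtCK.
Qed.

Lemma psd_add (C : numClosedFieldType) n (A B : 'M[C]_n) : psd A -> psd B -> psd (A + B).
Proof.
move=> [Ah Ap] [Bh Bp]; split.
  by apply/matrixP => i j; rewrite adjmxE !mxE rmorphD /= -!adjmxE Ah Bh.
by move=> v; rewrite mulmxDr mulmxDl mxE addr_ge0.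
Qed.

Lemma psd_scale (C : numClosedFieldType) n (A : 'M[C]_n) (p : C) : 0 <= p -> psd A -> psd (p *: A).
Proof.
move=> p0 [Ah Ap]; split.
  by apply/matrixP => i j; rewrite adjmxE !mxE rmorphM /= geC0_conj // -adjmxE Ah.
by move=> v; rewrite -scalemxAr -scalemxAl mxE mulr_ge0.
Qed.

Lemma psd0 (C : numClosedFieldType) n : psd (0 : 'M[C]_n).
Proof.
split; first by apply/matrixP => i j; rewrite adjmxE !mxE rmorph0.
by move=> v; rewrite mulmx0 mul0mx mxE.
Qed.

Lemma psd_sum (C : numClosedFieldType) n m (p : 'I_m -> C) (M : 'I_m -> 'M[C]_n) :
  (forall j, 0 <= p j) -> (forall j, psd (M j)) -> psd (\sum_(j < m) p j *: M j).
Proof.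
move=> p0 Mp; apply: (big_ind (fun X => psd X)); first exact: psd0.
  exact: psd_add.
by move=> j _; apply: psd_scale.
Qed.

Lemma prod_op_density (C : numClosedFieldType) (k : nat) (d : 'I_k -> nat)
  (rhos : forall i : 'I_k, 'M[C]_(d i)) :
  (forall i, density (rhos i)) -> density (prod_op rhos).
Proof.
move=> Hd; split.
  pose G (L : Idx d) (a : 'I_(dimH d)) :=
    \prod_(i < k) gramf (rhos i) (L i) (@enum_val (Idx d) predT a i).
  have -> : prod_op rhos = \matrix_(a, b) \sum_L (G L a)^* * G L b.
    apply/matrixP => a b; rewrite !mxE.
    have HE : forall i r s, rhos i r s =
        \sum_l (gramf (rhos i) l r)^* * gramf (rhos i) l s.
      move=> i r s; have [g gE ->] := psd_gram (proj1 (Hd i)); by rewrite gE.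
    under eq_bigr => i _ do rewrite HE.
    rewrite -sum_prod_dep; apply: eq_bigr => L _.
    by rewrite /G rmorph_prod -big_split.
  exact: gram_psd.
rewrite /mxtrace.
transitivity (\sum_(x : Idx d) \prod_(i < k) rhos i (x i) (x i)).
  rewrite (big_enum_val (A := predT) (fun x : Idx d => \prod_(i < k) rhos i (x i) (x i))).
  by apply: eq_bigr => a _; rewrite mxE.
rewrite (sum_prod_dep (fun i j => rhos i j j)).
by rewrite big1 // => i _; have [_ <-] := Hd i.
Qed.

Lemma sep_density (C : numClosedFieldType) (k : nat) (d : 'I_k -> nat)
  (sigma : 'M[C]_(dimH d)) : separable sigma -> density sigma.
Proof.
move=> [m [p [rhos [p0 p1 Hr ->]]]]; split.
  by apply: psd_sum => // j; exact: (proj1 (prod_op_density (Hr j))).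
rewrite raddf_sum /= -p1; apply: eq_bigr => j _.
by rewrite mxtraceZ (proj2 (prod_op_density (Hr j))) mulr1.
Qed.

Lemma comb_density (C : numClosedFieldType) n (A B : 'M[C]_n) (q : C) :
  0 <= q <= 1 -> density A -> density B -> density (q *: A + (1 - q) *: B).
Proof.
move=> /andP[q0 q1] [Ap At] [Bp Bt]; split.
  by apply: psd_add; apply: psd_scale => //; rewrite subr_ge0.
by rewrite mxtraceD !mxtraceZ At Bt !mulr1 addrC subrK.
Qed.

Theorem mainTheorem10 (C : numClosedFieldType) (k : nat) (d : 'I_k -> nat)
  (D : 'M[C]_(dimH d) -> 'M[C]_(dimH d) -> C) (E : 'M[C]_(dimH d) -> C) :
  metric_on_states D -> convex_each_arg D -> contractive D ->
  is_E_D D E ->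
  (forall rho, density rho -> exists sigma, separable sigma /\ D rho sigma = E rho) ->
  forall (rho : 'M[C]_(dimH d)) (eps : C),
    density rho -> 0 <= eps -> eps <= E rho ->
    is_inf (eps_set D E eps rho) (E rho - eps).
Proof.
move=> Hm Hc _ HE Hatt rho eps rhoD eps0 epsE.
have [tau [tauS tauE]] := Hatt rho rhoD.
have tauD := sep_density tauS.
have E0 : 0 <= E rho by rewrite -tauE; have [] := Hm rho tau tau rhoD tauD tauD.
have Drr : D rho rho = 0 by have [_ [_ h] _ _] := Hm rho rho rho rhoD rhoD rhoD; exact: h.
have Dtt : D tau tau = 0 by have [_ [_ h] _ _] := Hm tau tau tau tauD tauD tauD; exact: h.
split.
  move=> y [sigma [sD Dle ->]].
  have [tau' [tau'S tau'E]] := Hatt sigma sD.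
  have tau'D := sep_density tau'S.
  have h1 : E rho <= D rho tau' by apply: (proj1 (HE rho rhoD)); exists tau'.
  have [_ _ _ htri] := Hm rho sigma tau' rhoD sD tau'D.
  rewrite lerBlDl; apply: (le_trans h1); apply: (le_trans htri).
  by rewrite tau'E lerD2r.
move=> z Hz.
have [Ez | Enz] := eqVneq (E rho) 0.
  have eps_0 : eps = 0 by apply/eqP; rewrite eq_le eps0 -Ez epsE.
  rewrite eps_0 subr0; apply: Hz; exists rho; split => //.
  by rewrite Drr eps_0.
have Epos : 0 < E rho by rewrite lt_def Enz E0.
pose q := 1 - eps / E rho.
have q1 : 1 - q = eps / E rho by rewrite /q opprB addrC subrK.
have q01 : 0 <= q <= 1.
  rewrite /q subr_ge0 lerBlDr lerDl divr_ge0 ?andbT //.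
  by rewrite ler_pdivrMr // mul1r.
pose sigma := q *: rho + (1 - q) *: tau.
have sD : density sigma by apply: comb_density.
have [Hc1 Hc2] := Hc q rho tau rho q01 rhoD tauD rhoD.
have [Hc3 Hc4] := Hc q rho tau tau q01 rhoD tauD tauD.
apply: (le_trans (Hz (E sigma) _)).
  exists sigma; split => //.
  apply: (le_trans Hc2).
  by rewrite Drr mulr0 add0r q1 tauE divfK.
have h1 : E sigma <= D sigma tau by apply: (proj1 (HE sigma sD)); exists tau.
apply: (le_trans h1); apply: (le_trans Hc3).
by rewrite Dtt mulr0 addr0 tauE /q mulrBl mul1r divfK.
Qed.
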